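(* Let $k>0$ and assume $g$ satisfies (Hg) and (Hg2). Then there exists $\delta_a\in(0,1)$ such that for all $a\in(0,\delta_a)$: (i) $g''(a;a)>0$; (ii) $$0<\frac{g'(a;a)}{k+1}<\max_{A\in[a+\frac{2a}{k},1]}\frac{g(A;a)}{A}.$$
   Context: Derivatives $g',g''$ are with respect to the first argument. A function $g:\mathbb R\times[0,1]\to\mathbb R$, $(u,a)\mapsto g(u;a)$, satisfies (Hg) if it is $C^1$ and for every $a\in(0,1)$: $g(0;a)=g(a;a)=g(1;a)=0$, $g'(0;a)<0$, $g'(1;a)<0$, $g'(a;a)>0$, $g(v;a)>0$ for $v\in(-\infty,0)\cup(a,1)$ and $g(v;a)<0$ for $v\in(0,a)\cup(1,\infty)$. (Hg2): for each $a\in[0,1]$, $g(\cdot;a)\in C^2(\mathbb R)$; $g'(a;a)=0$ for $a\in\{0,1\}$; $g''(0;0)>0$, $g''(1;1)<0$; and there exist $a_0,a_1\in(0,1)$ such that for each $a\in(0,a_0)$ and each $a\in(a_1,1)$ there is a unique $v$ with $g''(v;a)=0$. *)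

(* Defs.v *)
From Stdlib Require Import Reals.
From Coquelicot Require Import Coquelicot.
Open Scope R_scope.

Definition gd1 (g : R -> R -> R) (u a : R) : R := Derive (fun v => g v a) u.
Definition gd2 (g : R -> R -> R) (u a : R) : R := Derive_n (fun v => g v a) 2 u.

Definition cont_strip (f : R -> R -> R) : Prop :=
  forall u a, 0 <= a <= 1 -> forall eps, 0 < eps -> exists delta, 0 < delta /\
    forall u' a', 0 <= a' <= 1 -> Rabs (u' - u) < delta -> Rabs (a' - a) < delta ->
      Rabs (f u' a' - f u a) < eps.

Definition C1_strip (g : R -> R -> R) : Prop :=
  exists gu ga : R -> R -> R,
    (forall u a, 0 <= a <= 1 -> is_derive (fun v => g v a) u (gu u a)) /\
    (forall u a, 0 < a < 1 -> is_derive (fun b => g u b) a (ga u a)) /\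
    cont_strip g /\ cont_strip gu /\ cont_strip ga.

Definition Hg (g : R -> R -> R) : Prop :=
  C1_strip g /\
  forall a, 0 < a < 1 ->
    g 0 a = 0 /\ g a a = 0 /\ g 1 a = 0 /\
    gd1 g 0 a < 0 /\ gd1 g 1 a < 0 /\ 0 < gd1 g a a /\
    (forall v, (v < 0 \/ (a < v < 1)) -> 0 < g v a) /\
    (forall v, ((0 < v < a) \/ 1 < v) -> g v a < 0).

Definition C2_R (f : R -> R) : Prop :=
  (forall u, ex_derive f u) /\ (forall u, ex_derive (Derive f) u) /\
  (forall u, continuous (Derive_n f 2) u).

Definition Hg2 (g : R -> R -> R) : Prop :=
  (forall a, 0 <= a <= 1 -> C2_R (fun v => g v a)) /\
  gd1 g 0 0 = 0 /\ gd1 g 1 1 = 0 /\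
  0 < gd2 g 0 0 /\ gd2 g 1 1 < 0 /\
  exists a0 a1, 0 < a0 < 1 /\ 0 < a1 < 1 /\
    (forall a, 0 < a < a0 -> exists! v, gd2 g v a = 0) /\
    (forall a, a1 < a < 1 -> exists! v, gd2 g v a = 0).

(* Main.v *)
Require Import Defs.
From Stdlib Require Import Reals Lra.
From Coquelicot Require Import Coquelicot.
Open Scope R_scope.
Lemma mono_after (f1 f2 : R -> R) a :
  0 < a < 1 -> (forall u, is_derive f1 u (f2 u)) -> continuity f2 ->
  f1 0 < 0 -> f1 1 < 0 -> 0 < f1 a -> (exists! v, f2 v = 0) -> f2 a <= 0 ->
  forall x y, a <= x -> x <= y -> f1 y <= f1 x.
Proof.
  intros Ha Hd Hc H0 H1 Ha' [v [Hv Hu]] Hfa.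
  assert (D : forall u, derivable_pt_lim f1 u (f2 u)) by (intro u; apply is_derive_Reals; auto).
  destruct (MVT_cor2 f1 f2 0 a) as [p [Hp1 Hp2]]; [lra| intros; auto |].
  destruct (MVT_cor2 f1 f2 a 1) as [q [Hq1 Hq2]]; [lra| intros; auto |].
  assert (Pp : 0 < f2 p) by nra.
  assert (Pq : f2 q < 0) by nra.
  assert (Neg : forall w, a <= w -> f2 w <= 0).
  { intros w Hw. destruct (Rle_lt_dec (f2 w) 0) as [|Hpos]; auto. exfalso.
    destruct (IVT_gen f2 p a 0 Hc) as [z1 [Hz1 Ez1]].
    { unfold Rmin, Rmax; repeat match goal with |- context [Rle_dec ?x ?y] => destruct (Rle_dec x y) end; lra. }
    destruct (IVT_gen f2 w q 0 Hc) as [z2 [Hz2 Ez2]].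
    { unfold Rmin, Rmax; repeat match goal with |- context [Rle_dec ?x ?y] => destruct (Rle_dec x y) end; lra. }
    assert (z1 <= a) by (revert Hz1; unfold Rmin, Rmax; repeat match goal with |- context [Rle_dec ?x ?y] => destruct (Rle_dec x y) end; lra).
    assert (a < z2).
    { assert (z2 <> w) by (intro; subst; lra). assert (z2 <> q) by (intro; subst; lra).
      revert Hz2; unfold Rmin, Rmax; repeat match goal with |- context [Rle_dec ?x ?y] => destruct (Rle_dec x y) end; lra. }
    pose proof (Hu z1 Ez1). pose proof (Hu z2 Ez2). lra. }
  intros x y Hx Hxy. destruct (Req_dec x y) as [->|Hne]; [lra|].
  destruct (MVT_cor2 f1 f2 x y) as [c [Hc1 Hc2]]; [lra| intros; auto |].
  pose proof (Neg c ltac:(lra)). nra.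
Qed.

Lemma pos_right (h : R -> R) L :
  is_derive h 0 L -> 0 < L -> h 0 = 0 -> exists y0, 0 < y0 /\ forall u, 0 < u < y0 -> 0 < h u.
Proof.
  intros Hd HL H0. apply is_derive_Reals in Hd.
  destruct (Hd L HL) as [d Hdd]. exists d. split; [apply cond_pos|].
  intros u Hu. specialize (Hdd u ltac:(lra)).
  rewrite Rabs_pos_eq in Hdd by lra. specialize (Hdd ltac:(lra)).
  rewrite Rplus_0_l, H0, Rminus_0_r in Hdd.
  apply Rabs_lt_between in Hdd.
  assert (0 < h u / u) by lra.
  replace (h u) with (h u / u * u) by (field; lra). nra.
Qed.

Theorem lemma5p5 (k : R) (g : R -> R -> R) :
  0 < k -> Hg g -> Hg2 g ->
  exists delta_a, 0 < delta_a < 1 /\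
    forall a, 0 < a < delta_a ->
      0 < gd2 g a a /\
      0 < gd1 g a a / (k + 1) /\
      exists A, a + 2 * a / k <= A <= 1 /\
        (forall B, a + 2 * a / k <= B <= 1 -> g B a / B <= g A a / A) /\
        gd1 g a a / (k + 1) < g A a / A.
Proof.
  intros Hk [[gu [ga [Hgu [_ [Cg [Cgu _]]]]]] Hga]
    [HC2 [H00 [_ [H2 [_ [a0 [a1 [Ha0 [_ [Huq _]]]]]]]]]].
  assert (E1 : forall u a, 0 <= a <= 1 -> gd1 g u a = gu u a).
  { intros u a Ha; unfold gd1; apply is_derive_unique; auto. }
  assert (D2 : forall a, 0 <= a <= 1 -> forall u, is_derive (fun v => gu v a) u (gd2 g u a)).
  { intros a Ha u. destruct (HC2 a Ha) as [_ [Hex _]].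
    replace (gd2 g u a) with (Derive (fun v => gu v a) u).
    2:{ unfold gd2; simpl. apply Derive_ext; intro t. symmetry; apply is_derive_unique; auto. }
    apply Derive_correct. apply ex_derive_ext with (Derive (fun v => g v a)); [|apply Hex].
    intro t; apply is_derive_unique; auto. }
  assert (C2 : forall a, 0 <= a <= 1 -> continuity (fun u => gd2 g u a)).
  { intros a Ha u. apply continuity_pt_filterlim. apply (proj2 (proj2 (HC2 a Ha))). }
  assert (h0 : gu 0 0 = 0) by (rewrite <- E1 by lra; exact H00).
  destruct (pos_right (fun u => gu u 0) (gd2 g 0 0)) as [y0 [Hy0 Hpos]]; auto.
  { apply D2; lra. }
  set (y := Rmin (y0/2) (1/2)).
  assert (Hy : 0 < y < y0 /\ y <= 1/2).
  { unfold y; split; [split|]. apply Rmin_Rgt; lra.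
    eapply Rle_lt_trans; [apply Rmin_l|lra]. apply Rmin_r. }
  assert (hy : 0 < gu y 0) by (apply Hpos; lra).
  assert (g00 : g 0 0 = 0).
  { destruct (Req_dec (g 0 0) 0) as [|Hne]; auto. exfalso.
    destruct (Cg 0 0 ltac:(lra) (Rabs (g 0 0)) ltac:(apply Rabs_pos_lt; auto)) as [d [Hd Hd']].
    set (a' := Rmin (d/2) (1/2)).
    assert (0 < a' <= 1/2) by (unfold a'; split; [apply Rmin_Rgt; lra| apply Rmin_r]).
    assert (a' <= d/2) by apply Rmin_l.
    specialize (Hd' 0 a' ltac:(lra)). rewrite Rminus_diag, Rabs_R0 in Hd'.
    specialize (Hd' Hd). rewrite Rminus_0_r, Rabs_pos_eq in Hd' by lra.
    specialize (Hd' ltac:(lra)). destruct (Hga a' ltac:(lra)) as [G0 _].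
    rewrite G0, Rminus_0_l, Rabs_Ropp in Hd'. lra. }
  set (c := g y 0).
  assert (Hc : 0 < c).
  { destruct (MVT_cor2 (fun u => g u 0) (fun u => gu u 0) 0 y) as [c' [Hc1 Hc2]]; [lra| |].
    { intros; apply is_derive_Reals; apply Hgu; lra. }
    unfold c. rewrite g00 in Hc1. pose proof (Hpos c' ltac:(lra)). nra. }
  set (e := gu y 0 / 3).
  assert (He : 0 < e) by (unfold e; lra).
  destruct (Cgu 0 0 ltac:(lra) e He) as [d5 [Hd5 Hd5']].
  set (x := Rmin (d5/2) (y/2)).
  assert (Hx : 0 < x <= d5/2 /\ x <= y/2).
  { unfold x; split; [split|]. apply Rmin_Rgt; lra. apply Rmin_l. apply Rmin_r. }
  assert (hx : gu x 0 < e).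
  { specialize (Hd5' x 0 ltac:(lra)). rewrite Rminus_0_r, Rabs_pos_eq in Hd5' by lra.
    rewrite Rminus_diag, Rabs_R0, h0, Rminus_0_r in Hd5'.
    specialize (Hd5' ltac:(lra) Hd5). apply Rabs_def2 in Hd5'. lra. }
  destruct (Cgu y 0 ltac:(lra) e He) as [d1 [Hd1 Hd1']].
  destruct (Cgu x 0 ltac:(lra) e He) as [d2 [Hd2 Hd2']].
  destruct (Cg y 0 ltac:(lra) (c/2) ltac:(lra)) as [d3 [Hd3 Hd3']].
  assert (Hq : 0 < (k+1)*c/(2*y)).
  { apply Rlt_div_r; [lra|]. rewrite Rmult_0_l. apply Rmult_lt_0_compat; lra. }
  destruct (Cgu 0 0 ltac:(lra) _ Hq) as [d4 [Hd4 Hd4']].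
  assert (Hyk : 0 < y*k/(k+2)).
  { apply Rlt_div_r; [lra|]. rewrite Rmult_0_l. apply Rmult_lt_0_compat; lra. }
  exists (Rmin a0 (Rmin x (Rmin d1 (Rmin d2 (Rmin d3 (Rmin d4 (y*k/(k+2)))))))).
  split.
  { split. repeat (apply Rmin_Rgt; split); lra.
    eapply Rle_lt_trans; [apply Rmin_l|lra]. }
  intros a [Ha Had].
  repeat match type of Had with
  | _ < Rmin _ _ => apply Rmin_Rgt in Had; destruct Had as [?H Had]
  | Rmin _ _ > _ => apply Rmin_Rgt in Had; destruct Had as [?H Had] end.
  assert (Ha1 : 0 <= a <= 1) by lra.
  destruct (Hga a ltac:(lra)) as [_ [_ [_ [G0 [G1 [Ga _]]]]]].
  rewrite !E1 in G0, G1, Ga by lra.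
  split.
  { destruct (Rle_lt_dec (gd2 g a a) 0) as [Hle|]; auto. exfalso.
    pose proof (mono_after (fun u => gu u a) (fun u => gd2 g u a) a ltac:(lra)
      (D2 a Ha1) (C2 a Ha1) G0 G1 Ga (Huq a ltac:(lra)) Hle x y ltac:(lra) ltac:(lra)) as M.
    simpl in M.
    specialize (Hd1' y a Ha1). rewrite Rminus_diag, Rabs_R0, Rminus_0_r, Rabs_pos_eq in Hd1' by lra.
    specialize (Hd1' Hd1 ltac:(lra)). apply Rabs_def2 in Hd1'.
    specialize (Hd2' x a Ha1). rewrite Rminus_diag, Rabs_R0, Rminus_0_r, Rabs_pos_eq in Hd2' by lra.
    specialize (Hd2' Hd2 ltac:(lra)). apply Rabs_def2 in Hd2'.
    unfold e in *. lra. }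
  rewrite E1 by lra.
  split.
  { apply Rlt_div_r; [lra|]. lra. }
  set (lo := a + 2 * a / k).
  assert (Hlo : 0 < lo < y).
  { unfold lo. assert (2*a/k*k = 2*a) by (field; lra).
    assert (0 < 2*a/k) by (apply Rlt_div_r; lra).
    assert (Hak : a < y*k/(k+2)) by lra. apply Rlt_div_r in Hak; [|lra].
    split; [lra|]. nra. }
  destruct (continuity_ab_maj (fun B => g B a / B) lo 1) as [A [HA1 HA2]]; [lra| |].
  { intros c0 Hc0. apply (continuity_pt_div (fun B => g B a) (fun B => B)).
    apply derivable_continuous_pt. exists (gu c0 a). apply is_derive_Reals; apply Hgu; lra.
    apply continuity_pt_id. lra. }
  exists A. split; [exact HA2|]. split; [exact HA1|].
  specialize (HA1 y ltac:(lra)). simpl in HA1.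
  specialize (Hd3' y a Ha1). rewrite Rminus_diag, Rabs_R0, Rminus_0_r, Rabs_pos_eq in Hd3' by lra.
  specialize (Hd3' Hd3 ltac:(lra)). apply Rabs_def2 in Hd3'.
  specialize (Hd4' a a Ha1). rewrite !Rminus_0_r, Rabs_pos_eq, h0, Rminus_0_r in Hd4' by lra.
  specialize (Hd4' ltac:(lra) ltac:(lra)). apply Rabs_def2 in Hd4'.
  apply Rlt_le_trans with (g y a / y); [|exact HA1].
  apply Rlt_trans with (c / (2*y)).
  { apply Rlt_div_l; [lra|]. replace (c/(2*y)*(k+1)) with ((k+1)*c/(2*y)) by (field; lra). lra. }
  replace (c/(2*y)) with ((c/2)/y) by (field; lra).
  unfold Rdiv at 1 3. apply Rmult_lt_compat_r. apply Rinv_0_lt_compat; lra. unfold c in *; lra.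
Qed.
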